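(* Let $G=(V,E,w)$ be a weighted undirected connected graph with $n$ vertices and $m$ edges, and let $\Pi_G=U\Sigma V^T$ be a thin SVD of its edge-vertex incidence matrix with $U\in\mathbb{R}^{n\times(n-1)}$, $\Sigma\in\mathbb{R}^{(n-1)\times(n-1)}$, $V\in\mathbb{R}^{m\times(n-1)}$, and let $Y=V^T$. Then: (1) if $T$ is a spanning tree of $G$, then $\mathrm{St}_T(G)=\|Y_{\mathcal S(T)}^{-1}\|_F^2$; (2) if $\mathcal S\subseteq[m]$ has cardinality $n-1$ and $Y_{\mathcal S}$ has full rank, then $H(\mathcal S)$ is a spanning tree of $G$.
   Context: Let $V=\{1,\dots,n\}$, $E=\{(u_1,v_1),\dots,(u_m,v_m)\}$, with positive weights $w$. The edge-vertex incidence matrix $\Pi_G\in\mathbb{R}^{n\times m}$ has $i$-th column $\sqrt{w(u_i,v_i)}(e_{u_i}-e_{v_i})$, where $e_j$ are standard basis vectors; since $G$ is connected, $\mathrm{rank}(\Pi_G)=n-1$. For a set of edges (e.g. of a spanning tree $T$), $\mathcal S(T)\subseteq[m]$ is the set of indices of its edges; for $\mathcal S\subseteq[m]$, $H(\mathcal S)$ is the subgraph of $G$ on vertex set $V$ with the edges indexed by $\mathcal S$. $Y_{\mathcal S}$ is the submatrix of columns of $Y$ indexed by $\mathcal S$. For a spanning tree $T$ and edge $e\in E$, let $p_T(e)$ be the set of edges on the unique path in $T$ between the endpoints of $e$; the stretch of $e$ is $\mathrm{St}_T(e)=\sum_{e'\in p_T(e)}w(e)/w(e')$, and $\mathrm{St}_T(G)=\sum_{e\in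 E}\mathrm{St}_T(e)$. $\|\cdot\|_F$ is the Frobenius norm. *)

(* Defs.v *)
From HB Require Import structures.
From mathcomp Require Import all_boot all_order all_algebra.
From mathcomp Require Import boolp reals.
Set Implicit Arguments. Unset Strict Implicit. Unset Printing Implicit Defensive.
Import Order.TTheory GRing.Theory Num.Theory.
Local Open Scope ring_scope.

Definition joins (N m : nat) (ends : 'I_m -> 'I_N * 'I_N)
  (e : 'I_m) (x y : 'I_N) : bool :=
  (ends e == (x, y)) || (ends e == (y, x)).

Definition adj (N m : nat) (ends : 'I_m -> 'I_N * 'I_N)
  (S : {set 'I_m}) : rel 'I_N :=
  fun x y => [exists e in S, joins ends e x y].

Definition sconnected (N m : nat) (ends : 'I_m -> 'I_N * 'I_N)
  (S : {set 'I_m}) : Prop :=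
  forall x y : 'I_N, connect (adj ends S) x y.

Definition is_cycle (N m : nat) (ends : 'I_m -> 'I_N * 'I_N)
  (S : {set 'I_m}) (k : nat) (es : nat -> 'I_m) (xs : nat -> 'I_N) : Prop :=
  [/\ (0 < k)%N,
      (forall i j, (i < k)%N -> (j < k)%N -> es i = es j -> i = j),
      (forall i j, (i < k)%N -> (j < k)%N -> xs i = xs j -> i = j) &
      forall i, (i < k)%N -> es i \in S /\ joins ends (es i) (xs i) (xs (i.+1 %% k)%N)].

Definition acyclic (N m : nat) (ends : 'I_m -> 'I_N * 'I_N)
  (S : {set 'I_m}) : Prop :=
  forall k es xs, ~ is_cycle ends S k es xs.

Definition spanning_tree (N m : nat) (ends : 'I_m -> 'I_N * 'I_N)
  (S : {set 'I_m}) : Prop :=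
  sconnected ends S /\ acyclic ends S.

Definition is_spath (N m : nat) (ends : 'I_m -> 'I_N * 'I_N)
  (S : {set 'I_m}) (u v : 'I_N) (k : nat) (es : nat -> 'I_m) (xs : nat -> 'I_N)
  : Prop :=
  [/\ xs 0%N = u, xs k = v,
      (forall i j, (i <= k)%N -> (j <= k)%N -> xs i = xs j -> i = j) &
      forall i, (i < k)%N -> es i \in S /\ joins ends (es i) (xs i) (xs i.+1)].

Definition is_path_edges (N m : nat) (ends : 'I_m -> 'I_N * 'I_N)
  (S : {set 'I_m}) (u v : 'I_N) (P : {set 'I_m}) : Prop :=
  exists k es xs, is_spath ends S u v k es xs /\
                  P = [set es (nat_of_ord i) | i : 'I_k].

(* p_T(e): the edge set of the (unique, when T is a spanning tree) path in T
   between the endpoints of e (set0 if no such path exists) *)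
Definition path_edges (N m : nat) (ends : 'I_m -> 'I_N * 'I_N)
  (T : {set 'I_m}) (e : 'I_m) : {set 'I_m} :=
  odflt set0 [pick P : {set 'I_m} |
                `[< is_path_edges ends T (ends e).1 (ends e).2 P >]].

Definition stretch_edge (R : realType) (N m : nat) (ends : 'I_m -> 'I_N * 'I_N)
  (w : 'I_m -> R) (T : {set 'I_m}) (e : 'I_m) : R :=
  \sum_(e' in path_edges ends T e) w e / w e'.

Definition stretch (R : realType) (N m : nat) (ends : 'I_m -> 'I_N * 'I_N)
  (w : 'I_m -> R) (T : {set 'I_m}) : R :=
  \sum_(e : 'I_m) stretch_edge ends w T e.

Definition incidence (R : realType) (N m : nat) (ends : 'I_m -> 'I_N * 'I_N)
  (w : 'I_m -> R) : 'M[R]_(N, m) :=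
  \matrix_(x, i) (Num.sqrt (w i) *
                  ((x == (ends i).1)%:R - (x == (ends i).2)%:R)).

Definition frob2 (R : realType) (p q : nat) (A : 'M[R]_(p, q)) : R :=
  \sum_(i < p) \sum_(j < q) A i j ^+ 2.

(* Main.v *)
Require Import Defs.
From HB Require Import structures.
From mathcomp Require Import all_boot all_order all_algebra.
From mathcomp Require Import boolp reals.
From mathcomp Require Import zify.
Set Implicit Arguments. Unset Strict Implicit. Unset Printing Implicit Defensive.
Import Order.TTheory GRing.Theory Num.Theory.
Local Open Scope ring_scope.

Lemma joinsC (N m : nat) (ends : 'I_m -> 'I_N * 'I_N) e x y :
  joins ends e x y = joins ends e y x.
Proof. by rewrite /joins orbC. Qed.

Lemma conn_const (R : Type) (N : nat) (e : rel 'I_N) (F : 'I_N -> R) :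
  (forall x y, e x y -> F x = F y) -> forall x y, connect e x y -> F x = F y.
Proof.
move=> He x y /connectP [p pth ->]; elim: p x pth => //= c p IH x /andP [h1 h2].
by rewrite (He _ _ h1) (IH _ h2).
Qed.

Lemma sum_ind (R : realType) (N : nat) (F : 'I_N -> R) u :
  \sum_a F a * (a == u)%:R = F u.
Proof.
rewrite (bigD1 u) //= eqxx mulr1 big1 ?addr0 // => a /negbTE ->; by rewrite mulr0.
Qed.

Lemma ker_const (R : realType) (n m : nat) (ends : 'I_m -> 'I_n.+1 * 'I_n.+1)
  (w : 'I_m -> R) (Hw : forall i, 0 < w i) p (g : 'I_p -> 'I_m) (x : 'rV[R]_n.+1) :
  x *m colsub g (incidence ends w) = 0 ->
  forall j, x 0 (ends (g j)).1 = x 0 (ends (g j)).2.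
Proof.
move=> H j; have := congr1 (fun M : 'M_(1, p) => M 0 j) H; rewrite !mxE.
under eq_bigr => a _ do rewrite !mxE mulrBr mulrBr.
rewrite sumrB.
under eq_bigr => a _ do rewrite mulrCA.
under [X in _ - X = _]eq_bigr => a _ do rewrite mulrCA.
rewrite -!mulr_sumr !sum_ind -mulrBr => /eqP; rewrite mulf_eq0 subr_eq0.
by rewrite sqrtr_eq0 leNgt Hw /= => /eqP.
Qed.

Lemma rank_conn (R : realType) (n m : nat) (ends : 'I_m -> 'I_n.+1 * 'I_n.+1)
  (w : 'I_m -> R) (Hw : forall i, 0 < w i) p (g : 'I_p -> 'I_m) (S : {set 'I_m})
  (HS : forall e, e \in S -> exists j, g j = e) :
  sconnected ends S -> (n <= \rank (colsub g (incidence ends w)))%N.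
Proof.
move=> HC; set D := colsub g _.
have Hk : (kermx D <= (const_mx 1 : 'rV[R]_(n.+1)))%MS.
  apply/row_subP => i; set x := row i (kermx D).
  have Hx : x *m D = 0 by rewrite /x -row_mul mulmx_ker row0.
  clearbody x.
  have Hc : forall a b, connect (adj ends S) a b -> x 0 a = x 0 b.
    apply: conn_const => a b /existsP [e /andP [eS je]].
    have [j gj] := HS e eS; have := ker_const Hw Hx j; rewrite gj.
    by case/orP: je => /eqP -> /=.
  apply/sub_rVP; exists (x 0 ord0); apply/rowP => a.
  by rewrite !mxE mulr1; apply: Hc.
have := mxrankS Hk; rewrite mxrank_ker.
have := rank_leq_row (const_mx 1 : 'rV[R]_(n.+1)).
lia.
Qed.

Lemma core (R : realType) (n m : nat) (ends : 'I_m -> 'I_n.+1 * 'I_n.+1)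
  (w : 'I_m -> R) (Hw : forall i, 0 < w i) p (f : 'I_p -> 'I_m) (finj : injective f)
  (k : nat) (es : nat -> 'I_m) (xs : nat -> 'I_n.+1) (nx : nat -> nat)
  (Hes : forall i j, (i < k)%N -> (j < k)%N -> es i = es j -> i = j)
  (Hin : forall i, (i < k)%N -> exists j, f j = es i)
  (Hj : forall i, (i < k)%N -> joins ends (es i) (xs i) (xs (nx i))) :
  exists h : 'cV[R]_p,
  (forall a, (colsub f (incidence ends w) *m h) a 0 =
     \sum_(i < k) ((a == xs i)%:R - (a == xs (nx i))%:R))
  /\ (forall j, h j 0 ^+ 2 = (f j \in [set es (nat_of_ord i) | i : 'I_k])%:R / w (f j)).
Proof.
pose s i := if ends (es i) == (xs i, xs (nx i)) then 1 else -1 : R.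
exists (\col_j \sum_(i < k | es i == f j) s i / Num.sqrt (w (f j))); split.
  move=> a; rewrite mxE.
  under eq_bigr => j _ do rewrite !mxE big_distrr /= big_mkcond /=.
  rewrite exchange_big /=; apply: eq_bigr => i _.
  have [j0 Hj0] := Hin i (ltn_ord i).
  rewrite -big_mkcond (big_pred1 j0) /=; last first.
    by move=> j; rewrite /= -Hj0 (inj_eq finj) eq_sym.
  have Hsq : Num.sqrt (w (es i)) != 0 by rewrite sqrtr_eq0 -ltNge Hw.
  rewrite Hj0 -mulrA mulrCA [Num.sqrt _ * _]mulrCA mulfV // mulr1.
  rewrite /s; have := Hj i (ltn_ord i).
  case/orP => /eqP He; rewrite He /=.
    by rewrite eqxx mulr1.
  case: ifP => [/eqP [E1 E2]|_]; first by rewrite E1 mulr1.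
  by rewrite mulrN1 opprB.
move=> j; rewrite mxE.
case: (boolP (f j \in [set es (nat_of_ord i) | i : 'I_k])) => [/imsetP [i0 _ Hi0] | Hn].
  rewrite (big_pred1 i0) /=; last first.
    move=> i; rewrite /= Hi0; apply/eqP/eqP => [E|-> //].
    by apply: val_inj; exact: (Hes _ _ (ltn_ord i) (ltn_ord i0) E).
  rewrite expr_div_n sqr_sqrtr ?ltW // /s; case: ifP => _;
  by rewrite ?sqrrN expr1n mul1r.
rewrite big1 ?expr0n ?mul0r // => i /eqP E.
by case/negP: Hn; apply/imsetP; exists i.
Qed.

Lemma path_vec (R : realType) (n m : nat) (ends : 'I_m -> 'I_n.+1 * 'I_n.+1)
  (w : 'I_m -> R) (Hw : forall i, 0 < w i) p (f : 'I_p -> 'I_m) (finj : injective f)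
  u v k es xs :
  is_spath ends [set f i | i : 'I_p] u v k es xs ->
  exists h : 'cV[R]_p,
  (forall a, (colsub f (incidence ends w) *m h) a 0 = (a == u)%:R - (a == v)%:R)
  /\ (forall j, h j 0 ^+ 2 = (f j \in [set es (nat_of_ord i) | i : 'I_k])%:R / w (f j)).
Proof.
case=> x0 xk xinj Hst.
have Hes : forall i j, (i < k)%N -> (j < k)%N -> es i = es j -> i = j.
  move=> i j Hi Hj E.
  have [_ Ji] := Hst i Hi; have [_ Jj] := Hst j Hj.
  move: Ji Jj; rewrite /joins E.
  have X : forall a b, (a <= k)%N -> (b <= k)%N -> xs a = xs b -> a = b by move=> *; apply: xinj.
  case/orP => /eqP -> /orP [] /eqP [A B].
  + by apply: X => //; apply: ltnW.
  + have := X _ _ (ltnW Hi) Hj A; have := X _ _ Hi (ltnW Hj) B; lia.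
  + have := X _ _ (ltnW Hi) Hj B; have := X _ _ Hi (ltnW Hj) A; lia.
  + by apply: X => //; apply: ltnW.
have Hin : forall i, (i < k)%N -> exists j, f j = es i.
  by move=> i Hi; have [/imsetP [j _ ->] _] := Hst i Hi; exists j.
have Hj : forall i, (i < k)%N -> joins ends (es i) (xs i) (xs i.+1).
  by move=> i Hi; have [] := Hst i Hi.
have [h [H1 H2]] := core Hw finj Hes Hin Hj.
exists h; split => // a; rewrite H1.
have -> : \sum_(i < k) ((a == xs i)%:R - (a == xs i.+1)%:R) =
          - \sum_(i < k) ((a == xs i.+1)%:R - (a == xs i)%:R :> R).
  by rewrite -sumrN; apply: eq_bigr => *; rewrite opprB.
rewrite -(big_mkord xpredT (fun i => (a == xs i.+1)%:R - (a == xs i)%:R)).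
by rewrite telescope_sumr // opprB x0 xk.
Qed.

Lemma cycle_vec (R : realType) (n m : nat) (ends : 'I_m -> 'I_n.+1 * 'I_n.+1)
  (w : 'I_m -> R) (Hw : forall i, 0 < w i) p (f : 'I_p -> 'I_m) (finj : injective f)
  k es xs :
  is_cycle ends [set f i | i : 'I_p] k es xs ->
  exists h : 'cV[R]_p, h != 0 /\ colsub f (incidence ends w) *m h = 0.
Proof.
case=> k0 Hes xinj Hst.
have Hin : forall i, (i < k)%N -> exists j, f j = es i.
  by move=> i Hi; have [/imsetP [j _ ->] _] := Hst i Hi; exists j.
have Hj : forall i, (i < k)%N -> joins ends (es i) (xs i) (xs (i.+1 %% k)%N).
  by move=> i Hi; have [] := Hst i Hi.
have [h [H1 H2]] := core Hw finj Hes Hin Hj.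
exists h; split.
  have [j0 Hj0] := Hin 0%N k0.
  apply/eqP => h0; have := H2 j0; rewrite h0 mxE expr0n /=.
  have -> : f j0 \in [set es (nat_of_ord i) | i : 'I_k].
    by apply/imsetP; exists (Ordinal k0).
  move/eqP; rewrite eq_sym mul1r invr_eq0; have := Hw (f j0); rewrite lt0r.
  by case/andP => /negbTE ->.
apply/matrixP => a b; rewrite (ord1 b) H1 mxE sumrB.
case: k k0 Hes Hin Hj H1 H2 Hst xinj => // k' _ *.
rewrite [X in X - _]big_ord_recl [X in _ - X]big_ord_recr /= modnn.
have -> : \sum_(i < k') (a == xs (i.+1 %% k'.+1)%N)%:R =
          \sum_(i < k') (a == xs (bump 0 i))%:R :> R.
  by apply: eq_bigr => i _; rewrite modn_small ?ltnS ?ltn_ord // /bump leq0n add1n.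
by rewrite [X in _ - X]addrC subrr.
Qed.

Lemma path_exists (N m : nat) (ends : 'I_m -> 'I_N * 'I_N) (S : {set 'I_m})
  (e0 : 'I_m) u v :
  connect (adj ends S) u v -> exists P, is_path_edges ends S u v P.
Proof.
move/connectP => [p pth ->]; case: (shortenP pth) => p' pth' uq _.
pose xs i := nth u (u :: p') i.
pose es i := odflt e0 [pick e in S | joins ends e (xs i) (xs i.+1)].
exists [set es (nat_of_ord i) | i : 'I_(size p')], (size p'), es, xs; split => //.
split => //.
- by rewrite /xs (last_nth u).
- by move=> i j Hi Hj /eqP; rewrite /xs nth_uniq /= ?ltnS // => /eqP.
- move=> i Hi; move/pathP: pth' => /(_ u i Hi) /existsP [e /andP [eS je]].
  rewrite /es; case: pickP => [e' /andP [eS' je'] | H] //=.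
  by move: (H e); rewrite eS je.
Qed.

Lemma ker_of_const (R : realType) (n m : nat) (ends : 'I_m -> 'I_n.+1 * 'I_n.+1)
  (w : 'I_m -> R) p (g : 'I_p -> 'I_m) (x : 'rV[R]_n.+1) :
  (forall j, x 0 (ends (g j)).1 = x 0 (ends (g j)).2) ->
  x *m colsub g (incidence ends w) = 0.
Proof.
move=> H; apply/matrixP => i j; rewrite (ord1 i) !mxE.
under eq_bigr => a _ do rewrite !mxE mulrBr mulrBr.
rewrite sumrB.
under eq_bigr => a _ do rewrite mulrCA.
under [X in _ - X = _]eq_bigr => a _ do rewrite mulrCA.
by rewrite -!mulr_sumr !sum_ind H subrr.
Qed.

Lemma frob_tr (R : realType) p q (M : 'M[R]_(p, q)) : frob2 M = \tr (M *m M^T).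
Proof.
rewrite /frob2 /mxtrace; apply: eq_bigr => i _; rewrite mxE.
by apply: eq_bigr => j _; rewrite mxE expr2.
Qed.

Lemma sum_img (R : realType) m p (f : 'I_p -> 'I_m) (finj : injective f)
  (F : 'I_m -> R) (P : {set 'I_m}) :
  P \subset [set f i | i : 'I_p] ->
  \sum_(e in P) F e = \sum_j (f j \in P)%:R * F (f j).
Proof.
move=> /subsetP HP.
have -> : \sum_(e in P) F e = \sum_(e in f @: [set j | f j \in P]) F e.
  apply: eq_bigl => x; apply/idP/imsetP => [xP | [j]].
  - by have /imsetP [j _ E] := HP x xP; exists j => //; rewrite inE -E.
  - by rewrite inE => H ->.
rewrite big_imset /=; last by move=> *; apply: finj.
rewrite big_mkcond; apply: eq_bigr => j _; rewrite inE.
by case: (f j \in P); rewrite ?mul1r ?mul0r.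
Qed.

Lemma path_edges_sub (N m : nat) (ends : 'I_m -> 'I_N * 'I_N) (T : {set 'I_m}) e :
  path_edges ends T e \subset T.
Proof.
rewrite /path_edges; case: pickP => [P /asboolP [k [es [xs [[_ _ _ Hst] ->]]]] | _] /=.
  by apply/subsetP => x /imsetP [i _ ->]; case: (Hst i (ltn_ord i)).
exact: sub0set.
Qed.

Lemma edge_vec (R : realType) (n m : nat) (ends : 'I_m -> 'I_n.+1 * 'I_n.+1)
  (w : 'I_m -> R) (Hw : forall i, 0 < w i) p (f : 'I_p -> 'I_m) (finj : injective f)
  (HC : sconnected ends [set f i | i : 'I_p]) (e : 'I_m) :
  exists g : 'cV[R]_p,
  (forall a, (colsub f (incidence ends w) *m g) a 0 = incidence ends w a e)
  /\ (forall j, g j 0 ^+ 2 =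
        (f j \in path_edges ends [set f i | i : 'I_p] e)%:R * (w e / w (f j))).
Proof.
rewrite /path_edges; case: pickP => [P /asboolP [k [es [xs [Hsp EP]]]] | H0] /=.
  have [h [H1 H2]] := path_vec Hw finj Hsp.
  exists (Num.sqrt (w e) *: h); split.
    by move=> a; rewrite -scalemxAr mxE H1 !mxE.
  move=> j; rewrite mxE exprMn sqr_sqrtr ?ltW // H2 EP.
  by rewrite mulrCA.
have [P HP] := path_exists e (HC (ends e).1 (ends e).2).
by move: (H0 P); rewrite (asboolT HP).
Qed.

Theorem theorem5p1 (R : realType) (n m : nat)
  (ends : 'I_m -> 'I_n.+1 * 'I_n.+1) (w : 'I_m -> R)
  (Hw : forall i, 0 < w i)
  (Hloop : forall i, (ends i).1 != (ends i).2)
  (Hconn : sconnected ends [set: 'I_m])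
  (U : 'M[R]_(n.+1, n)) (Sig : 'M[R]_n) (V : 'M[R]_(m, n))
  (HU : U^T *m U = 1%:M) (HV : V^T *m V = 1%:M)
  (HSig : is_diag_mx Sig) (HSig0 : forall i, 0 <= Sig i i)
  (Hsvd : incidence ends w = U *m Sig *m V^T) :
  let Y := V^T in
  (forall (T : {set 'I_m}), spanning_tree ends T ->
     forall f : 'I_n -> 'I_m, injective f -> [set f i | i : 'I_n] = T ->
       colsub f Y \in unitmx /\
       stretch ends w T = frob2 (invmx (colsub f Y)))
  /\
  (forall f : 'I_n -> 'I_m, injective f -> \rank (colsub f Y) = n ->
     spanning_tree ends [set f i | i : 'I_n]).
Proof.
move=> Y; subst Y.
set B := incidence ends w.
set A := U *m Sig.
have HB : B = A *m V^T by rewrite /B Hsvd.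
have HrB : (n <= \rank B)%N.
  have HBid : colsub id B = B by apply/matrixP => i j; rewrite [LHS]mxE.
  rewrite -HBid.
  apply: (rank_conn Hw (S := [set: 'I_m])) => // e _; by exists e.
have HSu : Sig \in unitmx.
  rewrite -row_free_unit /row_free eqn_leq rank_leq_row /=.
  apply: (leq_trans HrB); rewrite HB.
  apply: (leq_trans (mxrankM_maxl _ _)); exact: mxrankM_maxr.
have HAinv : invmx Sig *m U^T *m A = 1%:M.
  by rewrite /A -mulmxA (mulmxA U^T) HU mul1mx mulVmx.
have HBc : forall p (f : 'I_p -> 'I_m), colsub f B = A *m colsub f V^T.
  by move=> p f; rewrite HB mulmx_colsub.
have HYc : forall p (f : 'I_p -> 'I_m),
    colsub f V^T = invmx Sig *m U^T *m colsub f B.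
  by move=> p f; rewrite HBc mulmxA HAinv mul1mx.
split.
  move=> T [HTc _] f finj HT; subst T.
  set BT := colsub f B; set YT := colsub f V^T.
  have HrBT : (n <= \rank BT)%N.
    apply: (rank_conn Hw _ HTc) => e /imsetP [j _ ->]; by exists j.
  have HYu : YT \in unitmx.
    rewrite -row_free_unit /row_free eqn_leq rank_leq_row /=.
    apply: (leq_trans HrBT); rewrite /BT HBc; exact: mxrankM_maxr.
  split => //.
  have [G HG] := choice (edge_vec Hw finj HTc).
  pose Gam := \matrix_(j, e) G e j 0.
  have HBG : BT *m Gam = B.
    apply/matrixP => a e; have [H1 _] := HG e.
    rewrite -(H1 a) !mxE; apply: eq_bigr => j _; by rewrite /Gam !mxE.
  have HYG : YT *m Gam = V^T.
    by rewrite -[LHS]mul1mx -HAinv -[_ *m A *m _]mulmxA (mulmxA A) -HBc HBG HB mulmxA HAinv mul1mx.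
  have HG2 : Gam = invmx YT *m V^T by rewrite -HYG mulKmx.
  transitivity (frob2 Gam); last first.
    rewrite !frob_tr HG2 trmx_mul trmxK !mulmxA -(mulmxA _ V^T) HV mulmx1.
    by [].
  rewrite /frob2 /stretch exchange_big /=; apply: eq_bigr => e _.
  rewrite /stretch_edge (sum_img finj _ (path_edges_sub _ _ _)).
  apply: eq_bigr => j _; have [_ H2] := HG e; by rewrite mxE H2.
move=> f finj Hr.
set BT := colsub f B.
have HrBT : \rank BT = n.
  apply/eqP; rewrite eqn_leq rank_leq_col /= -{1}Hr HYc; exact: mxrankM_maxr.
split.
  move=> x y; case: (boolP (connect _ x y)) => // Hn; exfalso.
  set S := [set f i | i : 'I_n] in Hn *.
  pose ones := (const_mx 1 : 'rV[R]_n.+1).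
  pose chi := \row_a (connect (adj ends S) x a)%:R : 'rV[R]_n.+1.
  have Hones : (ones <= kermx BT)%MS.
    by apply/sub_kermxP; apply: ker_of_const => j; rewrite !mxE.
  have Hchi : (chi <= kermx BT)%MS.
    apply/sub_kermxP; apply: ker_of_const => j; rewrite !mxE.
    have Ha : forall a b, adj ends S a b -> adj ends S b a.
      by move=> a b /existsP [e /andP [eS je]]; apply/existsP; exists e; rewrite eS joinsC.
    have H1 : adj ends S (ends (f j)).1 (ends (f j)).2.
      apply/existsP; exists (f j); rewrite /joins -surjective_pairing eqxx andbT.
      by apply/imsetP; exists j.
    suff -> : connect (adj ends S) x (ends (f j)).1 = connect (adj ends S) x (ends (f j)).2 by [].
    apply/idP/idP => H.
    - exact: connect_trans H (connect1 H1).
    - exact: connect_trans H (connect1 (Ha _ _ H1)).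
  have Hrk : \rank (kermx BT) = 1%N by rewrite mxrank_ker HrBT subSnn.
  have Hro : \rank ones = 1%N.
    rewrite rank_rV; suff -> : ones != 0 by []; apply/eqP => /matrixP /(_ 0 0); rewrite !mxE => /eqP.
    by rewrite oner_eq0.
  have := (mxrank_leqif_eq Hones).2; rewrite Hro Hrk eqxx => /esym /andP [_ Hko].
  have /sub_rVP [c Hc] := submx_trans Hchi Hko.
  have Hx := congr1 (fun M : 'rV[R]_n.+1 => M 0 x) Hc.
  have Hy := congr1 (fun M : 'rV[R]_n.+1 => M 0 y) Hc.
  move: Hx Hy; rewrite /= !mxE connect0 (negbTE Hn) mulr1 => <- /eqP.
  by rewrite eqr_nat.
move=> k es xs Hc.
have [h [hn0 Hh]] := cycle_vec Hw finj Hc.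
have : (h^T <= kermx BT^T)%MS by apply/sub_kermxP; rewrite -trmx_mul Hh trmx0.
move/mxrankS; rewrite mxrank_ker !mxrank_tr HrBT subnn leqn0 mxrank_eq0.
by rewrite (negbTE hn0).
Qed.
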